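(* Let $\mathbb{G}$ be a $b$-bounded concurrent game system and $\pi$ a strategy profile given by probabilistic transducers. If $\pi$ is not a subgame perfect equilibrium in $\mathbb{G}$, then there exist an agent $i$, a state $v^*=\langle v,s,n\rangle$ of $\mathbb{G}\times\pi$ with $i\in P(v)$, and an action $a\in A_i$ such that (1) $v^*\in R$ (the set of relevant history-reachable states for agent $i$), and (2) in the Markov chain $\mathbb{G}\times\pi'$ obtained from $\mathbb{G}\times\pi$ by changing only the outgoing transition probabilities of $v^*$, namely by replacing the distribution $O_i(s^i,v)$ of agent $i$ with the point mass on $a$ (all other agents' outputs unchanged), the probability of reaching $T=\{\langle v',s',n'\rangle : v'\in G_i\}$ from $v^*$ is strictly larger than in $\mathbb{G}\times\pi$.
   Context: Fix a constant $b\ge 1$. A $b$-bounded concurrent game system is a tuple $\mathbb{G}=\langle V,v_0,\Omega,A,P,\delta,\mathbb{L},G,F\rangle$ where: $V$ is a finite set of states with initial state $v_0$; $\Omega=\{1,\dots,k\}$ is the set of agents; $A_i$ is the finite action set of agent $i$, $\Theta_W=\prod_{i\in W}A_i$; $P:V\to 2^\Omega$ with $|P(v)|\le b$; $\delta(v,\theta,v')\in[0,1]$ for $\theta\in\Theta_{P(v)}$ with $\sum_{v'}\delta(v,\theta,v')=1$, all probabilities binary fractions of exactly $\mathbb{L}$ bits; $G_i\subseteq V$ is agent $i$'s reachability goal; $F\in\mathbb{N}$ is a horizon. A play starts at $v_0$; at each state $v$ the agents in $P(v)$ choose actions from their current distributions, and the next state is sampled from $\delta$; the play visits $F$ states in total.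 Agent $i$'s payoff from a play is $1$ if it visits $G_i$ and $0$ otherwise; $p(\pi,i)$ is the expected payoff under profile $\pi$. A strategy of agent $i$ is any function $V^+\to\mathbb{D}(A_i)$; input strategies are given by probabilistic transducers $\langle S_i,s_0^i,V,\gamma^i,O_i\rangle$ (finite $S_i$, deterministic $\gamma^i:S_i\times V\to S_i$, $O_i:S_i\times V\to\mathbb{D}(A_i)$). The product transducer of $\pi$ has states $S=\prod_iS_i$, initial state $s_0$, componentwise transitions $\gamma$, and output $O(s,v)$ = product distribution of $O_j(s^j,v)$, $j\in P(v)$. A Nash equilibrium is a profile $\pi$ such that for every agent $i$ and every strategy $\pi'_i$, replacing $\pi_i$ by $\pi'_i$ does not increase $p(\cdot,i)$. A history is $h\in V^+$ starting at $v_0$, with $|h|\le F$, such that consecutive states $h[j],h[j+1]$ satisfy $\delta(h[j],\theta,h[j+1])>0$ for some $\theta$. The substrategy is $\pi_i|_h(w)=\pi_i(h\cdot w)$; the subgame $\mathbb{G}|_h$ starts at the last state of $h$ with horizon $F-|h|$, and agents whose goal was visited in $h$ get payoff $1$. $\pi$ is a subgame perfect equilibrium iff for every history $h$, $\pi|_h=\langle\pi_1|_h,\dots,\pi_k|_h\rangle$ is a Nash equilibrium in $\mathbb{G}|_h$. The Markov chain $\mathbb{G}\times\pi$ has states $V\times S\times[F]$ and transition probability from $\langle v_1,s_1,n_1\rangle$ to $\langle v_2,s_2,n_2\rangle$ equal to $p_vp_sp_n$, where $p_s=[s_2=\gamma(s_1,v_1)]$, $p_n=[n_2=n_1+1]$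 (no outgoing transitions when $n_1=F$), and $p_v=\sum_\theta\Pr[O(s_1,v_1)=\theta]\,\delta(v_1,\theta,v_2)$. A state $r$ is in $R$ (for agent $i$) iff there is a path $\langle v_0,s_0,1\rangle=x_1,\dots,x_m=r$, $x_j=\langle v'_j,s'_j,n_j\rangle$, with $\gamma(s'_j,v'_j)=s'_{j+1}$, $n_{j+1}=n_j+1$, $\delta(v'_j,\theta,v'_{j+1})>0$ for some $\theta\in\Theta_{P(v'_j)}$, and $v'_j\notin G_i$ for all $j$. *)

(* Defs.v *)
From HB Require Import structures.
From mathcomp Require Import all_boot all_order all_algebra.
From mathcomp Require Import reals.

Set Implicit Arguments.
Unset Strict Implicit.
Unset Printing Implicit Defensive.

Import Order.TTheory GRing.Theory Num.Theory.
Local Open Scope ring_scope.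

(* Agents are 'I_k (agent j+1 of the paper is j here).
   Joint actions are full profiles (one action per agent); delta is required
   (in bounded_cgs) to depend only on the components of agents in P(v). *)
Record cgs (R : realType) := CGS {
  cg_k : nat;
  cg_V : finType;
  cg_v0 : cg_V;
  cg_A : 'I_cg_k -> finType;
  cg_P : cg_V -> {set 'I_cg_k};
  cg_delta : cg_V -> {dffun forall j : 'I_cg_k, cg_A j} -> cg_V -> R;
  cg_L : nat;
  cg_G : 'I_cg_k -> {set cg_V};
  cg_F : nat }.

Arguments cg_A {R} c j.
Arguments cg_delta {R} c _ _ _.
Arguments cg_P {R} c _.
Arguments cg_G {R} c _.

Section Defs.
Variable R : realType.

Definition is_dist (T : finType) (d : T -> R) :=
  (forall x, 0 <= d x) /\ \sum_x d x = 1.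

Variable G : cgs R.

Local Notation V := (cg_V G).
Local Notation k := (cg_k G).
Local Notation A := (cg_A G).
Local Notation v0 := (cg_v0 G).
Local Notation delta := (cg_delta G).
Local Notation F := (cg_F G).

Definition jact := {dffun forall j : 'I_k, A j}.

Definition bounded_cgs (b : nat) :=
  [/\ (forall v, #|cg_P G v| <= b)%N,
      (forall v th v', 0 <= delta v th v' <= 1),
      (forall v th, \sum_(v' : V) delta v th v' = 1),
      (forall v (th th' : jact), (forall j, j \in cg_P G v -> th j = th' j) ->
          forall v', delta v th v' = delta v th' v') &
      (forall v th v', exists m : nat, delta v th v' = m%:R / 2 ^+ cg_L G)].

Definition strategy (i : 'I_k) := seq V -> A i -> R.
Definition valid_strategy i (sg : strategy i) := forall h, is_dist (sg h).
Definition sprofile := forall i : 'I_k, strategy i.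

Definition jointw := seq V -> jact -> R.

Definition prof_w (pi : sprofile) : jointw :=
  fun h th => \prod_(j : 'I_k) pi j h (th j).

Definition dev_w (pi : sprofile) i (sg : strategy i) : jointw :=
  fun h th => \prod_(j : 'I_k) (if j == i then sg h (th i) else pi j h (th j)).

Definition stepP (w : jointw) (h : seq V) (v' : V) : R :=
  \sum_(th : jact) w h th * delta (last v0 h) th v'.

Definition reached (i : 'I_k) (h : seq V) := has (fun v => v \in cg_G G i) h.

(* expected payoff of agent i after history h (already visited),
   with n further states still to be visited *)
Fixpoint val (w : jointw) (i : 'I_k) (h : seq V) (n : nat) : R :=
  if reached i h then 1 else
  match n with
  | 0 => 0
  | n'.+1 => \sum_(v' : V) stepP w h v' * val w i (rcons h v') n'
  end.

Definition edge (x y : V) := [exists th : jact, 0 < delta x th y].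

Definition is_history (h : seq V) :=
  exists t, h = v0 :: t /\ (size h <= F)%N /\ path edge v0 t.

(* pi|_h is a Nash equilibrium of G|_h (the continuation of the game after h,
   with F - |h| states still to be visited, agents whose goal is in h get 1) *)
Definition NE_after (pi : sprofile) (h : seq V) :=
  forall i (sg : strategy i), valid_strategy sg ->
    val (dev_w pi sg) i h (F - size h) <= val (prof_w pi) i h (F - size h).

Definition SPE (pi : sprofile) := forall h, is_history h -> NE_after pi h.

Record transducer (i : 'I_k) := Tr {
  tS : finType;
  ts0 : tS;
  tgam : tS -> V -> tS;
  tO : tS -> V -> A i -> R }.

Arguments tS {i} t.
Arguments ts0 {i} t.
Arguments tgam {i} t _ _.
Arguments tO {i} t _ _ _.

Definition valid_transducer i (T : transducer i) :=
  forall s v, is_dist (tO T s v).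

Definition tprofile := forall i : 'I_k, transducer i.

(* strategy given by a transducer: on h = v1..vm, output O(s_m, v_m) where
   s_1 = s0 and s_{j+1} = gamma(s_j, v_j) *)
Definition trans_strat i (T : transducer i) : strategy i :=
  fun h a => let x := head v0 h in let t := behead h in
    tO T (foldl (tgam T) (ts0 T) (belast x t)) (last x t) a.

Variable pi : tprofile.

Definition PS := {dffun forall j : 'I_k, tS (pi j)}.
Definition s0P : PS := finfun (fun j => ts0 (pi j)).
Definition gamP (s : PS) (v : V) : PS := finfun (fun j => tgam (pi j) (s j) v).

Definition cstate := (V * PS * nat)%type.

(* transition probability p_v from x to next V-component v2
   (the S- and n-components are deterministic) *)
Definition chain_tr (x : cstate) (v2 : V) : R :=
  \sum_(th : jact) (\prod_(j : 'I_k) tO (pi j) (x.1.2 j) x.1.1 (th j))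
                   * delta x.1.1 th v2.

Definition mod_tr (i : 'I_k) (a : A i) (vstar : cstate) (x : cstate) (v2 : V) : R :=
  if x == vstar then
    \sum_(th : jact) (\prod_(j : 'I_k)
        (if j == i then (th i == a)%:R else tO (pi j) (x.1.2 j) x.1.1 (th j)))
      * delta x.1.1 th v2
  else chain_tr x v2.

Fixpoint reach (tr : cstate -> V -> R) (i : 'I_k) (fuel : nat) (x : cstate) : R :=
  if x.1.1 \in cg_G G i then 1 else
  match fuel with
  | 0 => 0
  | f.+1 => if (x.2 < F)%N then
              \sum_(v2 : V) tr x v2 * reach tr i f (v2, gamP x.1.2 x.1.1, x.2.+1)
            else 0
  end.

(* n strictly increases and is bounded by F, so fuel F suffices *)
Definition reachT (tr : cstate -> V -> R) (i : 'I_k) (x : cstate) : R :=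
  reach tr i F x.

Definition chain_edge (x y : cstate) :=
  [&& y.1.2 == gamP x.1.2 x.1.1, y.2 == x.2.+1 & edge x.1.1 y.1.1].

Definition inR (i : 'I_k) (r : cstate) :=
  let x1 : cstate := (v0, s0P, 1%N) in
  exists p : seq cstate,
    [/\ path chain_edge x1 p, last x1 p = r &
        all (fun x : cstate => x.1.1 \notin cg_G G i) (x1 :: p)].

End Defs.

Arguments mod_tr {R G} pi i a vstar x v2.
Arguments chain_tr {R G} pi x v2.
Arguments reachT {R G} pi tr i x.
Arguments inR {R G} pi i r.
Arguments PS {R G} pi.
Arguments SPE {R G} pi.
Arguments trans_strat {R G i} T h a.
Arguments valid_transducer {R G i} T.
Arguments bounded_cgs {R} G b.

(* Main.v *)
From Pilot Require Import Defs.
From HB Require Import structures.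
From mathcomp Require Import all_boot all_order all_algebra.
From mathcomp Require Import reals zify.
Import Order.TTheory GRing.Theory Num.Theory.
Set Implicit Arguments.
Unset Strict Implicit.
Unset Printing Implicit Defensive.
Local Open Scope ring_scope.

Section S.
Variable R : realType.
Variable G : cgs R.
Local Notation V := (cg_V G).
Local Notation k := (cg_k G).
Local Notation A := (cg_A G).
Local Notation J := (jact G).

Lemma factor (i : 'I_k) (th : J) (f : forall j, A j -> R) (c : A i -> R) :
  \prod_j (if j == i then c (th i) else f j (th j))
  = c (th i) * \prod_(j | j != i) f j (th j).
Proof.
rewrite (bigD1 i) //= eqxx; congr (_ * _); apply: eq_bigr => j /negbTE -> //.
Qed.

Lemma sum_pt (i : 'I_k) (c : A i -> R) (x : A i) :
  \sum_a c a * (x == a)%:R = c x.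
Proof.
rewrite (bigD1 x) //= eqxx mulr1 big1 ?addr0 // => a; rewrite eq_sym => /negbTE ->.
by rewrite mulr0.
Qed.

Lemma linL (i : 'I_k) (c : A i -> R) (f : forall j, A j -> R) (d : J -> R) :
  \sum_(th : J) (\prod_j (if j == i then c (th i) else f j (th j))) * d th
  = \sum_a c a * \sum_(th : J) (\prod_j (if j == i then (th i == a)%:R else f j (th j))) * d th.
Proof.
under [RHS]eq_bigr do rewrite big_distrr.
rewrite exchange_big; apply: eq_bigr => th _ /=.
rewrite (@factor i th f c).
transitivity (\sum_a (c a * (th i == a)%:R) * ((\prod_(j | j != i) f j (th j)) * d th)).
  by rewrite -big_distrl /= (@sum_pt i c (th i)) -mulrA.
apply: eq_bigr => a _.
by rewrite (@factor i th f (fun y => (y == a)%:R)) !mulrA.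
Qed.

Definition upd (th : J) (i : 'I_k) (x : A i) : J := [ffun j => dfwith (fun j => th j) x j].

Lemma upd_in th i x : upd th x i = x.
Proof. by rewrite ffunE dfwith_in. Qed.
Lemma upd_out th i (x : A i) j : i != j -> upd th x j = th j.
Proof. by move=> ij; rewrite ffunE dfwith_out. Qed.

Definition sw (i : 'I_k) (a b y : A i) := if y == a then b else if y == b then a else y.
Lemma swK i a b y : @sw i a b (sw a b y) = y.
Proof.
rewrite /sw; case: (eqVneq y a) => [->|ya].
  by rewrite eqxx; case: eqVneq => // ->.
case: (eqVneq y b) => [->|yb]; first by rewrite eqxx.
by rewrite (negbTE ya) (negbTE yb).
Qed.

Definition tau i (a b : A i) (th : J) : J := upd th (sw a b (th i)).
Lemma tauK i a b : involutive (@tau i a b).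
Proof.
move=> th; apply/ffunP => j; rewrite /tau.
case: (eqVneq i j) => [<-|ij]; first by rewrite !upd_in swK.
by rewrite [LHS]upd_out // upd_out.
Qed.

Lemma sw_eqb i (a b y : A i) : (sw a b y == b) = (y == a).
Proof.
rewrite /sw; case: (eqVneq y a) => [ya|ya]; first by rewrite eqxx.
case: (eqVneq y b) => [yb|yb]; first by subst y; rewrite eq_sym (negbTE ya).
by rewrite (negbTE yb).
Qed.

Lemma fiber_inv i (a b : A i) (g : J -> R) :
  (forall th (x : A i), g (upd th x) = g th) ->
  \sum_(th : J) (th i == b)%:R * g th = \sum_(th : J) (th i == a)%:R * g th.
Proof.
move=> gi; rewrite (reindex_inj (can_inj (@tauK i a b))) /=.
apply: eq_bigr => th _; by rewrite /tau upd_in sw_eqb gi.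
Qed.

Lemma M_inv (b0 : nat) (i : 'I_k) (v : cg_V G) (f : forall j, A j -> R) (a b : A i) v' :
  bounded_cgs G b0 -> i \notin cg_P G v ->
  \sum_(th : J) (\prod_j (if j == i then (th i == b)%:R else f j (th j))) * cg_delta G v th v'
  = \sum_(th : J) (\prod_j (if j == i then (th i == a)%:R else f j (th j))) * cg_delta G v th v'.
Proof.
move=> [_ _ _ dP _] iP.
under eq_bigr do rewrite (@factor i _ f (fun y => (y == b)%:R)) -mulrA.
under [RHS]eq_bigr do rewrite (@factor i _ f (fun y => (y == a)%:R)) -mulrA.
apply: fiber_inv => th x; congr (_ * _).
  by apply: eq_bigr => j ji; rewrite upd_out // eq_sym.
apply: dP => j jP; apply: upd_out; apply/eqP => ij; move: iP; by rewrite ij jP.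
Qed.

Variable pi : tprofile G.
Local Notation v0 := (cg_v0 G).
Local Notation F := (cg_F G).
Local Notation CS := (cstate pi).
Local Notation P := (fun i => trans_strat (pi i)).
Local Notation VAL := Pilot.Defs.val.
Local Notation O j := (@tO R G j (pi j)).

Definition Mtr i (a : A i) (x : CS) v2 :=
  \sum_(th : J) (\prod_(j : 'I_k)
        (if j == i then (th i == a)%:R else O j (x.1.2 j) x.1.1 (th j)))
      * cg_delta G x.1.1 th v2.

Lemma mod_at i a (x : CS) v2 : mod_tr pi i a x x v2 = Mtr a x v2.
Proof. by rewrite /mod_tr eqxx. Qed.

Lemma chain_lin i (x : CS) v2 :
  chain_tr pi x v2 = \sum_a O i (x.1.2 i) x.1.1 a * Mtr a x v2.
Proof.
rewrite /chain_tr /Mtr -(@linL i (O i (x.1.2 i) x.1.1) (fun j => O j (x.1.2 j) x.1.1) (fun th => cg_delta G x.1.1 th v2)); apply: eq_bigr => th _; congr (_ * _).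
by apply: eq_bigr => j _; case: eqP => // ->.
Qed.

Definition st (t : seq V) : CS :=
  (last v0 t, foldl (@gamP R G pi) (s0P pi) (belast v0 t), (size t).+1).

Lemma foldl_gamP l j s :
  (foldl (@gamP R G pi) s l) j = foldl (@tgam R G j (pi j)) (s j) l.
Proof. by elim: l s => //= x l IH s; rewrite IH ffunE. Qed.

Lemma strat_st j t a :
  trans_strat (pi j) (v0 :: t) a = O j ((st t).1.2 j) (st t).1.1 a.
Proof. by rewrite /trans_strat /= foldl_gamP ffunE. Qed.

Lemma st_rcons t v :
  st (rcons t v) = (v, @gamP R G pi (st t).1.2 (st t).1.1, (st t).2.+1).
Proof.
rewrite /st last_rcons belast_rcons size_rcons /=.
by rewrite -foldl_rcons -lastI.
Qed.

Lemma stepP_prof t v' :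
  stepP (prof_w P) (v0 :: t) v' = chain_tr pi (st t) v'.
Proof.
rewrite /stepP /chain_tr /=; apply: eq_bigr => th _; congr (_ * _).
by rewrite /prof_w; apply: eq_bigr => j _; rewrite strat_st.
Qed.

Lemma stepP_dev i (sg : strategy i) t v' :
  stepP (dev_w P sg) (v0 :: t) v' = \sum_a sg (v0 :: t) a * Mtr a (st t) v'.
Proof.
rewrite /stepP /Mtr -(@linL i (sg (v0 :: t)) (fun j => O j ((st t).1.2 j) (st t).1.1)
   (fun th => cg_delta G (st t).1.1 th v')).
apply: eq_bigr => th _; congr (_ * _).
rewrite /dev_w; apply: eq_bigr => j _; case: eqP => // _; by rewrite strat_st.
Qed.

Lemma val0 (w : jointw G) i h : VAL w i h 0 = if reached i h then 1 else 0.
Proof. by []. Qed.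
Lemma valS (w : jointw G) i h n : VAL w i h n.+1 = if reached i h then 1 else
  \sum_v' stepP w h v' * VAL w i (rcons h v') n.
Proof. by []. Qed.

Lemma val_one (w : jointw G) i h n : reached i h -> VAL w i h n = 1.
Proof. by case: n => [|n] /= ->. Qed.

Lemma reach_one tr i f (x : CS) : x.1.1 \in cg_G G i -> reach tr i f x = 1.
Proof. by case: f => [|f] /= ->. Qed.

Lemma nr_last i t : ~~ reached i (v0 :: t) -> last v0 t \notin cg_G G i.
Proof. apply: contra => H; apply/hasP; exists (last v0 t) => //; exact: mem_last. Qed.

Lemma reached_rcons i t v : v \in cg_G G i -> reached i (v0 :: rcons t v).
Proof.
move=> vG; change (v0 :: rcons t v) with (rcons (v0 :: t) v).
by rewrite /reached has_rcons vG.
Qed.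

Lemma nr_rcons i t v : ~~ reached i (v0 :: t) -> v \notin cg_G G i ->
  ~~ reached i (v0 :: rcons t v).
Proof.
move=> nr vG; change (v0 :: rcons t v) with (rcons (v0 :: t) v).
by rewrite /reached has_rcons negb_or vG.
Qed.

Lemma VR i : forall n t f, ~~ reached i (v0 :: t) -> ((size t).+1 + n = F)%N ->
  (n <= f)%N -> VAL (prof_w P) i (v0 :: t) n = reach (chain_tr pi) i f (st t).
Proof.
elim=> [|n IH] t f nr hs hf.
  rewrite val0 (negbTE nr); case: f hf => [|f] _ /=; first by rewrite ifF //; apply/negbTE/nr_last.
  rewrite ifF; last by apply/negbTE/nr_last.
  by rewrite ifF //; apply/negbTE; lia.
case: f hf => [//|f] hf.
have -> : VAL (prof_w P) i (v0 :: t) n.+1 = \sum_v' stepP (prof_w P) (v0 :: t) v' *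
   VAL (prof_w P) i (rcons (v0 :: t) v') n by rewrite valS (negbTE nr).
have -> : reach (chain_tr pi) i f.+1 (st t) = \sum_v2 chain_tr pi (st t) v2 *
   reach (chain_tr pi) i f (v2, @gamP R G pi (st t).1.2 (st t).1.1, (st t).2.+1).
  rewrite /= ifF; last by apply/negbTE/nr_last.
  by rewrite ifT //=; lia.
apply: eq_bigr => v' _; rewrite stepP_prof -st_rcons; congr (_ * _).
case: (boolP (v' \in cg_G G i)) => vG.
  rewrite val_one ?reach_one //; last exact: reached_rcons.
  by rewrite /st last_rcons.
apply: IH; first exact: nr_rcons.
  by rewrite size_rcons; lia.
lia.
Qed.

Lemma reach_mod i a (vs x : CS) f : (vs.2 < x.2)%N ->
  reach (mod_tr pi i a vs) i f x = reach (chain_tr pi) i f x.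
Proof.
elim: f x => [|f IH] x hx //=.
case: ifP => // _; case: ifP => // _.
apply: eq_bigr => v2 _; rewrite IH /=; last by lia.
rewrite /mod_tr ifF //; apply/eqP => e; move: hx; by rewrite e ltnn.
Qed.

Lemma reachT_mod i a t n : ~~ reached i (v0 :: t) -> ((size t).+1 + n.+1 = F)%N ->
  reachT pi (mod_tr pi i a (st t)) i (st t)
  = \sum_v' Mtr a (st t) v' * VAL (prof_w P) i (rcons (v0 :: t) v') n.
Proof.
move=> nr hs; rewrite /reachT.
have [f Ef] : exists f, F = f.+1 by exists F.-1; lia.
rewrite Ef /= ifF; last by apply/negbTE/nr_last.
rewrite ifT; last by lia.
apply: eq_bigr => v' _; rewrite mod_at reach_mod /=; last by lia.
congr (_ * _); rewrite -st_rcons.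
case: (boolP (v' \in cg_G G i)) => vG.
  rewrite val_one ?reach_one //; last exact: reached_rcons.
  by rewrite /st last_rcons.
symmetry; apply: VR; first exact: nr_rcons.
  by rewrite size_rcons; lia.
lia.
Qed.

Lemma inR_st i t : path (@edge R G) v0 t -> ~~ reached i (v0 :: t) -> inR pi i (st t).
Proof.
elim/last_ind: t => [|t v IH] hp nr.
  exists [::]; split => //=; rewrite andbT.
  by move: nr; rewrite /reached /= orbF.
move: hp; rewrite rcons_path => /andP [hp he].
have := nr; change (v0 :: rcons t v) with (rcons (v0 :: t) v).
rewrite /reached has_rcons negb_or => /andP [vG nr'].
case: (IH hp nr') => p [pp pl pa].
exists (rcons p (st (rcons t v))); split.
- rewrite rcons_path pp pl /= /chain_edge st_rcons /= !eqxx /=; exact: he.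
- by rewrite last_rcons.
- rewrite -rcons_cons all_rcons pa andbT /st last_rcons; exact: vG.
Qed.

Lemma Mtr_notP (b0 : nat) i (a : A i) t v' : bounded_cgs G b0 -> valid_transducer (pi i) ->
  i \notin cg_P G (last v0 t) -> Mtr a (st t) v' = chain_tr pi (st t) v'.
Proof.
move=> hb hv iP; rewrite (chain_lin i).
under eq_bigr => b _ do rewrite /Mtr (@M_inv b0 i (st t).1.1 (fun j => O j ((st t).1.2 j) (st t).1.1) a b v' hb iP).
by rewrite -big_distrl /= (proj2 (hv _ _)) mul1r.
Qed.

Lemma stepP_ge0 (b0 : nat) i (sg : strategy i) t v' : bounded_cgs G b0 ->
  (forall j, valid_transducer (pi j)) -> valid_strategy sg ->
  0 <= stepP (dev_w P sg) (v0 :: t) v'.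
Proof.
move=> [_ hd _ _ _] hv hs; apply: sumr_ge0 => th _; apply: mulr_ge0.
  apply: prodr_ge0 => j _; case: ifP => _; first exact: (proj1 (hs _)).
  rewrite strat_st; exact: (proj1 (hv _ _ _)).
by case/andP: (hd (last v0 (v0 :: t)) th v').
Qed.

Lemma stepP_zero (w : jointw G) (b0 : nat) t v' : bounded_cgs G b0 ->
  ~~ edge (last v0 t) v' -> stepP w (v0 :: t) v' = 0.
Proof.
move=> [_ hd _ _ _] /existsPn he; apply: big1 => th _.
have := he th; case/andP: (hd (last v0 t) th v') => h0 _.
rewrite lt_neqAle h0 andbT negbK => /eqP <-; by rewrite mulr0.
Qed.

Lemma claim (b0 : nat) i (sg : strategy i) : bounded_cgs G b0 ->
  (forall j, valid_transducer (pi j)) -> valid_strategy sg ->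
  (forall t (a : A i) n, path (@edge R G) v0 t -> ~~ reached i (v0 :: t) ->
     ((size t).+1 + n.+1 = F)%N ->
     \sum_v' Mtr a (st t) v' * VAL (prof_w P) i (rcons (v0 :: t) v') n
       <= VAL (prof_w P) i (v0 :: t) n.+1) ->
  forall n t, path (@edge R G) v0 t -> ((size t).+1 + n = F)%N ->
    VAL (dev_w P sg) i (v0 :: t) n <= VAL (prof_w P) i (v0 :: t) n.
Proof.
move=> hb hv hs H; elim=> [|n IH] t hp hsz; first by rewrite !val0.
case: (boolP (reached i (v0 :: t))) => nr; first by rewrite !val_one.
rewrite valS (negbTE nr).
apply: (@le_trans _ _ (\sum_v' stepP (dev_w P sg) (v0 :: t) v' *
            VAL (prof_w P) i (rcons (v0 :: t) v') n)).
  apply: ler_sum => v' _.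
  case: (boolP (edge (last v0 t) v')) => he; last by rewrite (@stepP_zero (dev_w P sg) b0 t v' hb he) !mul0r.
  apply: ler_wpM2l; first exact: (@stepP_ge0 b0 i sg t v' hb hv hs).
  apply: (IH (rcons t v')); first by rewrite rcons_path hp he.
  by rewrite size_rcons; lia.
have E2 : \sum_v' stepP (dev_w P sg) (v0 :: t) v' * VAL (prof_w P) i (rcons (v0 :: t) v') n
  = \sum_a sg (v0 :: t) a * \sum_v' Mtr a (st t) v' * VAL (prof_w P) i (rcons (v0 :: t) v') n.
  under eq_bigr do rewrite stepP_dev big_distrl.
  rewrite exchange_big; apply: eq_bigr => a _; rewrite big_distrr.
  by apply: eq_bigr => v' _; rewrite /= mulrA.
rewrite E2.
apply: (@le_trans _ _ (\sum_a sg (v0 :: t) a * VAL (prof_w P) i (v0 :: t) n.+1)).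
  apply: ler_sum => a _; apply: ler_wpM2l; first exact: (proj1 (hs _)).
  apply: H => //; lia.
by rewrite -big_distrl /= (proj2 (hs _)) mul1r.
Qed.
End S.

From Stdlib Require Import Classical.
Unset Implicit Arguments.
Set Strict Implicit.

Theorem mainTheorem5 (R : realType) (b : nat) (G : cgs R) (pi : tprofile G) :
  (1 <= b)%N -> bounded_cgs G b ->
  (forall i, valid_transducer (pi i)) ->
  ~ SPE (fun i => trans_strat (pi i)) ->
  exists (i : 'I_(cg_k G)) (v : cg_V G) (s : PS pi) (n : nat) (a : cg_A G i),
    [/\ i \in cg_P G v, (1 <= n <= cg_F G)%N,
        inR pi i (v, s, n) &
        reachT pi (chain_tr pi) i (v, s, n)
          < reachT pi (mod_tr pi i a (v, s, n)) i (v, s, n)].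
Proof.
move=> _ hb hv hspe; apply: NNPP => NE; apply: hspe.
move=> h [t [-> [hsz hp]]] i sg hsg.
apply: (claim hb hv hsg); [|exact: hp|by move: hsz; rewrite /=; lia].
move=> t' a n hp' nr hs.
have E : Pilot.Defs.val (prof_w (fun i => trans_strat (pi i))) i (cg_v0 G :: t') n.+1
   = \sum_v' chain_tr pi (st pi t') v' *
       Pilot.Defs.val (prof_w (fun i => trans_strat (pi i))) i (rcons (cg_v0 G :: t') v') n.
  by rewrite valS (negbTE nr); apply: eq_bigr => v' _; rewrite stepP_prof.
case: (boolP (i \in cg_P G (last (cg_v0 G) t'))) => iP.
  rewrite -(@reachT_mod R G pi i a t' n nr hs) (@VR _ _ pi i n.+1 t' (cg_F G) nr hs); last by lia.
  rewrite leNgt; apply/negP => lt; apply: NE.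
  exists i, (st pi t').1.1, (st pi t').1.2, (st pi t').2, a; split => //.
    by rewrite /=; lia.
  exact: inR_st.
rewrite E le_eqVlt; apply/orP; left; apply/eqP; apply: eq_bigr => v' _.
by rewrite (@Mtr_notP R G pi b i a t' v' hb (hv i) iP).
Qed.
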